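(* Let $I$ be an $\mathfrak m$-primary ideal of $R$ and let $r>0$ with $\mathfrak m^r\subset I$. Then for all integers $k,m\ge r$, $I^{(m)}/A^{(m)}=I^{(k)}/A^{(k)}$ as elements of the Grothendieck group $\mathbf G(X)$.
   Context: $\mathbf{k}$ is algebraically closed; $X\subset\mathbb{A}^N$ is an affine variety over $\mathbf k$ (possibly reducible) whose irreducible components $X_1,\ldots,X_r$ all have dimension $n$, containing the origin $o$; $R=\mathcal O_{X,o}$ with maximal ideal $\mathfrak m$. $A^{(m)}\subset R$: restrictions to $X$ of polynomials of degree $\le m$; $I^{(m)}=A^{(m)}\cap I$. $\mathbf K(X)$: finite-dimensional $\mathbf k$-subspaces of the algebra $\mathbf k(X)$ of rational functions with nonzero restriction to each $X_i$, identified when their restrictions to each $X_i$ coincide; a commutative semigroup under $LM=\operatorname{span}\{fg\}$. $\mathbf G(X)$: its Grothendieck group, i.e. formal quotients of $\mathbf K(X)/\!\sim$ where $L\sim M$ iff $LN=MN$ for some $N\in\mathbf K(X)$. *)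

(* Defs.v *)
From HB Require Import structures.
From mathcomp Require Import all_boot all_algebra.
From mathcomp Require Import mpoly.

Set Implicit Arguments.
Unset Strict Implicit.
Unset Printing Implicit Defensive.

Import GRing.Theory.
Local Open Scope ring_scope.

Section Defs.
Variables (k : closedFieldType) (N : nat).

Definition point := 'I_N -> k.
Definition poly := {mpoly k[N]}.
Definition origin : point := fun _ => 0.

Definition vanishes_on (X : point -> Prop) (p : poly) : Prop :=
  forall x, X x -> p.@[x] = 0.

Definition algebraic_set (X : point -> Prop) : Prop :=
  exists S : poly -> Prop, forall x, X x <-> (forall p, S p -> p.@[x] = 0).

(* an affine variety in the (possibly reducible) sense of the paper *)
Definition affine_variety (X : point -> Prop) : Prop := algebraic_set X.

Definition subset_pts (Y Z : point -> Prop) : Prop := forall x, Y x -> Z x.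
Definition proper_subset_pts (Y Z : point -> Prop) : Prop :=
  subset_pts Y Z /\ exists x, Z x /\ ~ Y x.

Definition irreducible_set (Y : point -> Prop) : Prop :=
  [/\ algebraic_set Y, exists x, Y x &
      forall Z1 Z2, algebraic_set Z1 -> algebraic_set Z2 ->
        (forall x, Y x -> Z1 x \/ Z2 x) ->
        subset_pts Y Z1 \/ subset_pts Y Z2].

Definition irreducible_component (X Y : point -> Prop) : Prop :=
  [/\ irreducible_set Y, subset_pts Y X &
      forall Z, irreducible_set Z -> subset_pts Y Z -> subset_pts Z X ->
        subset_pts Z Y].

Definition chain_in (Y : point -> Prop) (d : nat) : Prop :=
  exists Z : nat -> point -> Prop,
    (forall i, (i <= d)%N -> irreducible_set (Z i) /\ subset_pts (Z i) Y) /\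
    (forall i, (i < d)%N -> proper_subset_pts (Z i) (Z i.+1)).

Definition dim_eq (Y : point -> Prop) (n : nat) : Prop :=
  chain_in Y n /\ ~ chain_in Y n.+1.

(* An element of R is represented by a fraction f/g of polynomials with
   g(o) <> 0; two fractions define the same element of R iff
   h (f g' - f' g) vanishes on X for some h with h(o) <> 0. *)
Definition pfrac := (poly * poly)%type.

Definition is_germ (a : pfrac) : Prop := a.2.@[origin] != 0.

Definition germ_eq (X : point -> Prop) (a b : pfrac) : Prop :=
  exists h : poly, h.@[origin] != 0 /\ vanishes_on X (h * (a.1 * b.2 - b.1 * a.2)).

Definition frac_add (a b : pfrac) : pfrac := (a.1 * b.2 + b.1 * a.2, a.2 * b.2).
Definition frac_mul (a b : pfrac) : pfrac := (a.1 * b.1, a.2 * b.2).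
Definition frac_one : pfrac := (1, 1).
Definition frac_zero : pfrac := (0, 1).
Definition frac_pow (a : pfrac) (e : nat) : pfrac := iter e (frac_mul a) frac_one.

(* I : an ideal of R, given as the set of fractions representing its elements *)
Definition local_ideal (X : point -> Prop) (I : pfrac -> Prop) : Prop :=
  [/\ forall a, I a -> is_germ a,
      forall a b, I a -> is_germ b -> germ_eq X a b -> I b,
      I frac_zero,
      forall a b, I a -> I b -> I (frac_add a b) &
      forall a b, is_germ a -> I b -> I (frac_mul a b)].

Definition max_germ (a : pfrac) : Prop := is_germ a /\ a.1.@[origin] = 0.

Definition primary_ideal (X : point -> Prop) (I : pfrac -> Prop) : Prop :=
  [/\ local_ideal X I, ~ I frac_one &
      forall a b, is_germ a -> is_germ b -> I (frac_mul a b) ->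
        I a \/ exists e, I (frac_pow b e)].

Definition m_primary (X : point -> Prop) (I : pfrac -> Prop) : Prop :=
  primary_ideal X I /\ forall a, (exists e, I (frac_pow a e)) <-> max_germ a.

(* m^r is contained in I: every product of r elements of m lies in I
   (m^r is the ideal generated by such products) *)
Definition mpow_sub (I : pfrac -> Prop) (r : nat) : Prop :=
  forall s : seq pfrac, size s = r -> (forall a, a \in s -> max_germ a) ->
    I (foldr frac_mul frac_one s).

(* total ring of fractions of k[X] = k[x]/I(X): fractions f/g with g a
   non-zero-divisor of k[X]; f/g = f'/g' iff f g' - f' g vanishes on X. *)
Definition nonzerodivisor (X : point -> Prop) (g : poly) : Prop :=
  forall h, vanishes_on X (g * h) -> vanishes_on X h.

Definition is_ratfun (X : point -> Prop) (a : pfrac) : Prop := nonzerodivisor X a.2.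

Definition rat_eq (X : point -> Prop) (a b : pfrac) : Prop :=
  vanishes_on X (a.1 * b.2 - b.1 * a.2).

Definition frac_scale (c : k) (a : pfrac) : pfrac := (c *: a.1, a.2).

Definition lin_comb (s : seq (k * pfrac)) : pfrac :=
  foldr (fun cb acc => frac_add (frac_scale cb.1 cb.2) acc) frac_zero s.

Definition in_span (X : point -> Prop) (S : pfrac -> Prop) (a : pfrac) : Prop :=
  exists s : seq (k * pfrac), (forall cb, cb \in s -> S cb.2) /\ rat_eq X a (lin_comb s).

Definition span_eq (X : point -> Prop) (S T : pfrac -> Prop) : Prop :=
  forall a, is_ratfun X a -> (in_span X S a <-> in_span X T a).

(* generating set of the product L M N = span{f g h} *)
Definition prod3 (L M P : pfrac -> Prop) : pfrac -> Prop :=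
  fun c => exists a b d, [/\ L a, M b, P d & c = frac_mul (frac_mul a b) d].

(* a finite-dimensional subspace (given by a finite spanning list) belonging
   to K(X): made of rational functions, with nonzero restriction to every
   irreducible component of X *)
Definition in_KX (X : point -> Prop) (P : seq pfrac) : Prop :=
  (forall a, a \in P -> is_ratfun X a) /\
  forall Y, irreducible_component X Y -> exists a, a \in P /\ ~ vanishes_on Y a.1.

(* L/M = L'/M' in the Grothendieck group G(X): L M' N = L' M N for some N in K(X) *)
Definition G_eq (X : point -> Prop) (L M L' M' : pfrac -> Prop) : Prop :=
  exists P : seq pfrac, in_KX X P /\
    span_eq X (prod3 L M' (fun a => a \in P)) (prod3 L' M (fun a => a \in P)).

(* A^(m): restrictions to X of polynomials of degree <= m *)
Definition Aspace (m : nat) : pfrac -> Prop :=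
  fun a => exists f : poly, [/\ (msize f <= m.+1)%N & a = (f, 1)].

Definition Ispace (I : pfrac -> Prop) (m : nat) : pfrac -> Prop :=
  fun a => exists f : poly, [/\ (msize f <= m.+1)%N, I (f, 1) & a = (f, 1)].

End Defs.

(* Main.v *)
Require Import Defs.
From mathcomp Require Import all_boot all_algebra.
From mathcomp Require Import mpoly.
From mathcomp Require Import zify.
Set Implicit Arguments. Unset Strict Implicit. Unset Printing Implicit Defensive.
Import GRing.Theory.
Local Open Scope ring_scope.
Lemma mnm_seq (N : nat) (e : 'X_{1..N}) :
  exists t : seq 'I_N, e = (\sum_(i <- t) U_(i))%MM /\ size t = mdeg e.
Proof.
move: {2}(mdeg e) (erefl (mdeg e)) => d; elim: d e => [|d IH] e He.
  exists [::]; split => //; rewrite big_nil; apply/eqP; by rewrite -mdeg_eq0 He.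
have [i Hi] : exists i, e i != 0%N.
  case: (pickP (fun i => e i != 0%N)) => [i Hi|H0]; first by exists i.
  have E : e = 0%MM.
    apply/mnmP => i; rewrite mnm0E; move: (H0 i) => /negbFE/eqP //.
  by move: He; rewrite E mdeg0.
have Hle : (U_(i) <= e)%MM by rewrite lep1mP.
have E : e = ((e - U_(i)) + U_(i))%MM by rewrite submK.
have Hd : mdeg (e - U_(i))%MM = d by move: He; rewrite {1}E mdegD mdeg1 addn1 => -[].
have [t [Et St]] := IH _ Hd.
exists (i :: t); split; last by rewrite /= St Hd.
by rewrite big_cons {1}E Et addmC.
Qed.

Lemma mnm_split (N : nat) (e : 'X_{1..N}) j : (j <= mdeg e)%N ->
  exists c d : 'X_{1..N}, e = (c + d)%MM /\ mdeg c = j.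
Proof.
move=> Hj; have [t [Et St]] := mnm_seq e.
exists (\sum_(i <- take j t) U_(i))%MM, (\sum_(i <- drop j t) U_(i))%MM; split.
  by rewrite -big_cat cat_take_drop.
rewrite mdeg_sum.
under eq_bigr do rewrite mdeg1.
by rewrite sum1_size size_take St; case: ltngtP Hj => // ->.
Qed.

Lemma germ_eq_of (k : closedFieldType) (N : nat) (X : point k N -> Prop) (a b : pfrac k N) :
  a.1 * b.2 = b.1 * a.2 -> germ_eq X a b.
Proof.
move=> H; exists 1; split; first by rewrite meval1 oner_neq0.
by move=> x _; rewrite H subrr mulr0 meval0.
Qed.

Lemma germ1 (k : closedFieldType) (N : nat) (p : Defs.poly k N) : is_germ (p, 1).
Proof. by rewrite /is_germ /= meval1 oner_neq0. Qed.

Lemma JD (k : closedFieldType) (N : nat) (X : point k N -> Prop) I f g :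
  local_ideal X I -> I (f, 1) -> I (g, 1) -> I (f + g, 1).
Proof.
case=> _ Heq _ Hadd _ Hf Hg.
apply: (Heq _ _ (Hadd _ _ Hf Hg)); first exact: germ1.
by apply: germ_eq_of; rewrite /= !mulr1.
Qed.

Lemma JM (k : closedFieldType) (N : nat) (X : point k N -> Prop) I f g :
  local_ideal X I -> I (g, 1) -> I (f * g, 1).
Proof.
case=> _ Heq _ _ Hmul Hg.
apply: (Heq _ _ (Hmul _ _ (germ1 f) Hg)); first exact: germ1.
by apply: germ_eq_of; rewrite /= !mulr1.
Qed.

Lemma JZ (k : closedFieldType) (N : nat) (X : point k N -> Prop) I c g :
  local_ideal X I -> I (g, 1) -> I (c *: g, 1).
Proof. move=> HI Hg; by rewrite -mulr_algl; apply: JM HI Hg. Qed.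

Lemma J0 (k : closedFieldType) (N : nat) (X : point k N -> Prop) I :
  local_ideal X I -> I (0, 1).
Proof. by case. Qed.

Lemma JB (k : closedFieldType) (N : nat) (X : point k N -> Prop) I f g :
  local_ideal X I -> I (f, 1) -> I (g, 1) -> I (f - g, 1).
Proof. by move=> HI Hf Hg; apply: (JD HI Hf); rewrite -scaleN1r; apply: JZ HI Hg. Qed.

Lemma foldr_X (k : closedFieldType) (N : nat) (t : seq 'I_N) :
  foldr (@frac_mul k N) (@frac_one k N) [seq ('X_[U_(i)], 1) | i <- t]
  = (\prod_(i <- t) 'X_[U_(i)], 1).
Proof.
elim: t => [|i t IH] /=; first by rewrite big_nil.
by rewrite IH big_cons /frac_mul /= mul1r.
Qed.

Lemma JX (k : closedFieldType) (N : nat) (X : point k N -> Prop) I r (e : 'X_{1..N}) :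
  local_ideal X I -> mpow_sub I r -> (r <= mdeg e)%N -> I ('X_[e], 1).
Proof.
move=> HI Hr Hle.
have [c [d [-> Hc]]] := mnm_split Hle.
have [t [Et St]] := mnm_seq c.
rewrite mpolyXD mulrC; apply: (JM _ HI).
have := Hr [seq ('X_[U_(i)], 1) | i <- t].
rewrite foldr_X mprodXE -Et; apply; first by rewrite size_map St.
move=> a /mapP [i _ ->]; split; first exact: germ1.
by rewrite /= mevalX (bigD1 i) //= mnm1E eqxx expr1 /origin mul0r.
Qed.

Definition PS (k : closedFieldType) (N : nat) (Q : Defs.poly k N -> Prop) (p : Defs.poly k N) :=
  exists s : seq (k * Defs.poly k N), (forall cq, cq \in s -> Q cq.2) /\
    p = \sum_(cq <- s) cq.1 *: cq.2.

Lemma PS0 (k : closedFieldType) (N : nat) (Q : Defs.poly k N -> Prop) : PS Q 0.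
Proof. by exists [::]; rewrite big_nil. Qed.

Lemma PSD (k : closedFieldType) (N : nat) (Q : Defs.poly k N -> Prop) p q :
  PS Q p -> PS Q q -> PS Q (p + q).
Proof.
move=> [s [Hs ->]] [t [Ht ->]]; exists (s ++ t); split; last by rewrite big_cat.
by move=> cq; rewrite mem_cat => /orP [/Hs|/Ht].
Qed.

Lemma PSZ (k : closedFieldType) (N : nat) (Q : Defs.poly k N -> Prop) c p :
  PS Q p -> PS Q (c *: p).
Proof.
move=> [s [Hs ->]]; exists [seq (c * cq.1, cq.2) | cq <- s]; split.
  by move=> cq /mapP [x /Hs H ->].
rewrite big_map scaler_sumr; apply: eq_bigr => x _; by rewrite scalerA.
Qed.

Lemma PS_of (k : closedFieldType) (N : nat) (Q : Defs.poly k N -> Prop) p :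
  Q p -> PS Q p.
Proof.
move=> H; exists [:: (1, p)]; split.
  by move=> cq; rewrite inE => /eqP ->.
rewrite big_seq1 /=; exact: (esym (scale1r _)).
Qed.

Lemma PS_sum (k : closedFieldType) (N : nat) (Q : Defs.poly k N -> Prop) (T : eqType)
   (r : seq T) (P : pred T) F :
  (forall i, i \in r -> P i -> PS Q (F i)) -> PS Q (\sum_(i <- r | P i) F i).
Proof.
move=> H; rewrite big_seq_cond; apply: big_ind; [exact: PS0 | exact: PSD |].
by move=> i /andP [Hi HP]; apply: H.
Qed.

Lemma PS_trans (k : closedFieldType) (N : nat) (Q Q' : Defs.poly k N -> Prop) p :
  (forall q, Q q -> PS Q' q) -> PS Q p -> PS Q' p.
Proof.
move=> H [s [Hs ->]]; apply: PS_sum => i Hi _.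
by apply: PSZ; apply: H; apply: Hs Hi.
Qed.

Definition Qml (k : closedFieldType) (N : nat) (I : pfrac k N -> Prop) (m l : nat) (p : Defs.poly k N) :=
  exists f g : Defs.poly k N, [/\ (msize f <= m.+1)%N, I (f, 1), (msize g <= l.+1)%N & p = f * g].

Lemma msizeMX (k : closedFieldType) (N : nat) (p : Defs.poly k N) (c : 'X_{1..N}) :
  (msize (p * 'X_[c]) <= msize p + mdeg c)%N.
Proof.
have [->|nz] := eqVneq p 0; first by rewrite mul0r msize0.
rewrite msizeM // ?msizeX; last by rewrite -msize_poly_eq0 msizeX.
by rewrite addnS.
Qed.

Lemma mono_ok (k : closedFieldType) (N : nat) (X : point k N -> Prop) I r m l (e : 'X_{1..N}) :
  local_ideal X I -> mpow_sub I r -> (r <= m)%N -> (r <= l)%N ->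
  (r <= mdeg e)%N -> (mdeg e <= m + l)%N -> PS (Qml I l m) 'X_[e].
Proof.
move=> HI Hr Hm Hl He1 He2.
have Hj : (maxn r (mdeg e - m) <= mdeg e)%N by rewrite geq_max He1 leq_subr.
have [c [d [Ed Hc]]] := mnm_split Hj.
apply: PS_of; exists 'X_[c], 'X_[d]; split.
- by rewrite msizeX Hc ltnS geq_max Hl /=; lia.
- by apply: (JX HI Hr); rewrite Hc leq_maxl.
- rewrite msizeX ltnS; have := congr1 (@mdeg N) Ed; rewrite mdegD Hc. lia.
- by rewrite Ed mpolyXD.
Qed.

Lemma low_ok (k : closedFieldType) (N : nat) (X : point k N -> Prop) I r m l p (b : 'X_{1..N}) :
  local_ideal X I -> (r <= m)%N -> (r <= l)%N ->
  I (p, 1) -> (msize p <= r)%N -> (mdeg b <= l)%N -> PS (Qml I l m) (p * 'X_[b]).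
Proof.
move=> HI Hm Hl Hp Hsp Hb.
have Hj : (mdeg b - minn (mdeg b) m <= mdeg b)%N by apply: leq_subr.
have [c [d [Ed Hc]]] := mnm_split Hj.
have Hd : mdeg d = minn (mdeg b) m.
  have := congr1 (@mdeg N) Ed; rewrite mdegD Hc; lia.
apply: PS_of; exists (p * 'X_[c]), 'X_[d]; split.
- apply: leq_trans (msizeMX _ _) _; rewrite Hc; lia.
- by rewrite mulrC; apply: (JM _ HI).
- by rewrite msizeX Hd ltnS geq_minr.
- by rewrite Ed mpolyXD mulrA.
Qed.

Lemma msize_sumX (k : closedFieldType) (N : nat) (s : seq 'X_{1..N}) (P : pred 'X_{1..N})
   (F : 'X_{1..N} -> k) j :
  (forall a, a \in s -> P a -> (mdeg a < j)%N) ->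
  (msize (\sum_(a <- s | P a) F a *: 'X_[a]) <= j)%N.
Proof.
move=> H; rewrite big_seq_cond; apply: (big_ind (fun p : Defs.poly k N => (msize p <= j)%N)).
- by rewrite msize0.
- by move=> x y Hx Hy; apply: leq_trans (msizeD_le _ _) _; rewrite geq_max Hx Hy.
- move=> a /andP [Ha HP]; apply: leq_trans (msizeZ_le _ _) _.
  by rewrite msizeX; apply: H.
Qed.

Lemma main_poly (k : closedFieldType) (N : nat) (X : point k N -> Prop) I r m l p :
  local_ideal X I -> mpow_sub I r -> (r <= m)%N -> (r <= l)%N ->
  Qml I m l p -> PS (Qml I l m) p.
Proof.
move=> HI Hr Hm Hl [f [g [Hf Jf Hg ->]]].
have Ef := mpolyE f.
rewrite (bigID (fun a => (r <= mdeg a)%N)) /= in Ef.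
set fh := \sum_(a <- _ | _) _ in Ef.
set fl := \sum_(a <- _ | _) _ in Ef.
have Jfh : I (fh, 1).
  rewrite /fh big_seq_cond; apply: (big_ind (fun p => I (p, 1))).
  - exact: J0 HI.
  - by move=> x y Hx Hy; apply: JD HI Hx Hy.
  - by move=> a /andP [_ Ha]; apply: (JZ _ HI); apply: (JX HI Hr).
have Jfl : I (fl, 1).
  have -> : fl = f - fh by rewrite {1}Ef addrC addrK.
  exact: JB HI Jf Jfh.
have Sfl : (msize fl <= r)%N.
  apply: msize_sumX => a _ /=; rewrite -ltnNge //.
rewrite Ef mulrDl; apply: PSD.
- rewrite /fh mulr_suml; apply: PS_sum => a Ha Hra.
  rewrite -scalerAl; apply: PSZ.
  rewrite {1}(mpolyE g) mulr_sumr; apply: PS_sum => b Hb _.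
  rewrite -scalerAr -mpolyXD; apply: PSZ; apply: (mono_ok HI Hr) => //.
  1,2: rewrite mdegD; have := msize_mdeg_lt Ha; have := msize_mdeg_lt Hb; lia.
- rewrite {1}(mpolyE g) mulr_sumr; apply: PS_sum => b Hb _.
  rewrite -scalerAr; apply: PSZ; apply: (low_ok HI Hm Hl Jfl Sfl).
  have := msize_mdeg_lt Hb; lia.
Qed.

Lemma lin_comb1 (k : closedFieldType) (N : nat) (s : seq (k * pfrac k N)) :
  (forall cb, cb \in s -> cb.2.2 = 1) ->
  lin_comb s = (\sum_(cb <- s) cb.1 *: cb.2.1, 1).
Proof.
elim: s => [|cb s IH] H; first by rewrite big_nil.
rewrite /= IH; last by move=> x Hx; apply: H; rewrite inE Hx orbT.
rewrite big_cons /frac_add /frac_scale /= H ?inE ?eqxx //.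
by rewrite !mulr1.
Qed.

Definition S3 (k : closedFieldType) (N : nat) (I : pfrac k N -> Prop) m l :=
  prod3 (Ispace I m) (@Aspace k N l) (fun a => a \in [:: ((1 : Defs.poly k N), (1 : Defs.poly k N))]).

Lemma S3_form (k : closedFieldType) (N : nat) (I : pfrac k N -> Prop) m l b :
  S3 I m l b -> exists p, Qml I m l p /\ b = (p, 1).
Proof.
move=> [a [c [d [[f [Hf Jf ->]] [g [Hg ->]] Hd ->]]]].
move: Hd; rewrite inE => /eqP ->.
exists (f * g); split; first by exists f, g.
by rewrite /frac_mul /= !mulr1.
Qed.

Lemma S3_of (k : closedFieldType) (N : nat) (I : pfrac k N -> Prop) m l p :
  Qml I m l p -> S3 I m l (p, 1).
Proof.
move=> [f [g [Hf Jf Hg ->]]].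
exists (f, 1), (g, 1), (1, 1); split.
- by exists f.
- by exists g.
- by rewrite inE.
- by rewrite /frac_mul /= !mulr1.
Qed.

Lemma span_to_PS (k : closedFieldType) (N : nat) (X : point k N -> Prop) I m l a :
  in_span X (S3 I m l) a -> exists p, PS (Qml I m l) p /\ Defs.rat_eq X a (p, 1).
Proof.
move=> [s [Hs Hr]].
have H1 : forall cb, cb \in s -> cb.2.2 = 1.
  by move=> cb /Hs /S3_form [p [_ ->]].
rewrite lin_comb1 // in Hr.
eexists; split; last exact: Hr.
exists [seq (cb.1, cb.2.1) | cb <- s]; split; last by rewrite big_map.
move=> cq /mapP [cb /Hs /S3_form [p [Hp E]] ->]; by rewrite /= E.
Qed.

Lemma PS_to_span (k : closedFieldType) (N : nat) (X : point k N -> Prop) I m l a p :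
  PS (Qml I m l) p -> Defs.rat_eq X a (p, 1) -> in_span X (S3 I m l) a.
Proof.
move=> [s [Hs ->]] Hr.
exists [seq (cq.1, (cq.2, 1)) | cq <- s]; split.
  by move=> cb /mapP [cq /Hs Hq ->]; apply: S3_of.
rewrite lin_comb1; last by move=> cb /mapP [cq _ ->].
by rewrite big_map.
Qed.

Theorem corollary2p5 (k : closedFieldType) (N n : nat)
  (X : point k N -> Prop) (I : pfrac k N -> Prop) (r : nat) :
  affine_variety X ->
  X (@origin k N) ->
  (forall Y, irreducible_component X Y -> dim_eq Y n) ->
  m_primary X I ->
  (0 < r)%N ->
  mpow_sub I r ->
  forall m l : nat, (r <= m)%N -> (r <= l)%N ->
    G_eq X (Ispace I m) (@Aspace k N m) (Ispace I l) (@Aspace k N l).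
Proof.
move=> _ _ _ [[HI _ _] _] _ Hr m l Hm Hl.
exists [:: (1, 1)]; split.
  split.
    move=> a; rewrite inE => /eqP -> h Hh x Hx.
    by have := Hh x Hx; rewrite mul1r.
  move=> Y [[_ [x Hx] _] _ _]; exists (1, 1); split; first by rewrite inE.
  by move=> H; have := H x Hx; rewrite meval1 => /eqP; rewrite oner_eq0.
move=> a _; split.
- move=> /(span_to_PS (I := I) (m := m) (l := l)) [p [Hp Ha]].
  apply: (PS_to_span (p := p)) => //.
  apply: (PS_trans _ Hp) => q Hq; exact: (main_poly HI Hr Hm Hl Hq).
- move=> /(span_to_PS (I := I) (m := l) (l := m)) [p [Hp Ha]].
  apply: (PS_to_span (p := p)) => //.
  apply: (PS_trans _ Hp) => q Hq; exact: (main_poly HI Hr Hl Hm Hq).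
Qed.
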